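(* Let $(R,\mathfrak m)$ be a noetherian local ring and $M$ an $R$-module. Let $(\mathfrak p_i)_{i\in\mathbb N}$ be a sequence of prime ideals with $\mathfrak p_i\in\operatorname{Att}_R(M)$ for all $i$, and assume that $\mathfrak q:=\bigcap_{i\in\mathbb N}\mathfrak p_i$ is a prime ideal of $R$. Then $\mathfrak q\in\operatorname{Att}_R(M)$.
   Context: For an arbitrary $R$-module $N$, $\operatorname{Att}_R(N)$ is the set of prime ideals $\mathfrak p$ of $R$ such that $\mathfrak p=\operatorname{Ann}_R(N/U)$ for some $R$-submodule $U\subseteq N$. *)

(* Defs.v *)
From HB Require Import structures.
From mathcomp Require Import all_boot all_algebra.
Set Implicit Arguments. Unset Strict Implicit. Unset Printing Implicit Defensive.
Import GRing.Theory.
Local Open Scope ring_scope.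

Section CommAlg.
Variable R : comNzRingType.

Definition is_ideal (I : R -> Prop) : Prop :=
  [/\ I 0, (forall x y, I x -> I y -> I (x + y)) & (forall r x, I x -> I (r * x))].

Definition is_prime_ideal (I : R -> Prop) : Prop :=
  [/\ is_ideal I, ~ I 1 & (forall x y, I (x * y) -> I x \/ I y)].

Definition is_maximal_ideal (I : R -> Prop) : Prop :=
  [/\ is_ideal I, ~ I 1 &
      (forall J : R -> Prop, is_ideal J -> (forall x, I x -> J x) -> ~ J 1 ->
         forall x, J x -> I x)].

Definition noetherian_ring : Prop :=
  forall I : nat -> R -> Prop,
    (forall n, is_ideal (I n)) ->
    (forall n x, I n x -> I n.+1 x) ->
    exists N, forall n x, (N <= n)%N -> I n x -> I N x.

Definition local_ring_with (m : R -> Prop) : Prop :=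
  is_maximal_ideal m /\
  forall J : R -> Prop, is_maximal_ideal J -> forall x, J x <-> m x.

Variable M : lmodType R.

Definition is_submodule (U : M -> Prop) : Prop :=
  [/\ U 0, (forall x y, U x -> U y -> U (x + y)) & (forall (r : R) x, U x -> U (r *: x))].

(* Ann_R(M/U) = { r | r M ⊆ U } *)
Definition ann_quot (U : M -> Prop) : R -> Prop := fun r => forall x : M, U (r *: x).

Definition attached_prime (p : R -> Prop) : Prop :=
  is_prime_ideal p /\
  exists U : M -> Prop, is_submodule U /\ forall r, p r <-> ann_quot U r.

End CommAlg.

(* Main.v *)
Require Import Defs.
From HB Require Import structures.
From mathcomp Require Import all_boot all_algebra.

Theorem theorem1p12 (R : comNzRingType) (m : R -> Prop) (M : lmodType R)
  (p : nat -> R -> Prop) :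
  noetherian_ring R -> local_ring_with m ->
  (forall i, attached_prime M (p i)) ->
  is_prime_ideal (fun r => forall i, p i r) ->
  attached_prime M (fun r => forall i, p i r).
Proof.
move=> _ _ Hatt Hq; split => //.
pose V := fun x : M => forall i (U : M -> Prop),
  (is_submodule U /\ forall r, p i r <-> ann_quot U r) -> U x.
exists V; split.
- split.
  + by move=> i U [[H0 _ _] _].
  + move=> x y Hx Hy i U HU; have [[_ HD _] _] := HU.
    exact: HD (Hx i U HU) (Hy i U HU).
  + move=> r x Hx i U HU; have [[_ _ HZ] _] := HU.
    exact: HZ (Hx i U HU).
- move=> r; split.
  + move=> Hr x i U [HsU HU]; exact: ((proj1 (HU r)) (Hr i) x).
  + move=> Hr i; have [_ [U [HsU HU]]] := Hatt i.
    apply/(proj2 (HU r)) => x; exact: (Hr x i U (conj HsU HU)).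
Qed.
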